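(* For every $\epsilon>0$, $\rho^h\in\mathcal{P}(\mathcal{T}^h)$ with positive entries, and $(K,L)\in\Sigma^h$, the Scharfetter--Gummel flux \[ \mathcal{J}^{h,\rho}_{K|L}=\epsilon\tau_{K|L}\big(\mathfrak b(q_{K|L}/\epsilon)u_K-\mathfrak b(-q_{K|L}/\epsilon)u_L\big),\qquad \mathfrak b(s)=\frac{s}{e^s-1},\ u_K=\frac{\rho^h_K}{|K|}, \] satisfies $\mathcal{J}^{h,\rho}_{K|L}=D_2\overline{\mathcal{R}}^*_{\epsilon,h}\big(\rho^h,-\overline\nabla\mathcal{E}'_{\epsilon,h}(\rho^h)\big)(K,L)$, where $\overline{\mathcal{R}}^*_{\epsilon,h}$ is the `cosh' dual dissipation potential with edge conductivity $\vartheta^{\epsilon,h,\rho}$ defined below. In particular, the Scharfetter--Gummel scheme $\partial_t\rho^h_K+\sum_{L\in\mathcal{T}^h_K}\mathcal{J}^{h,\rho}_{K|L}=0$ possesses the `cosh' gradient flow structure with driving energy $\mathcal{E}_{\epsilon,h}$.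
   Context: $(\mathcal{T}^h,\Sigma^h)$ is a tessellation of a bounded domain: finite family of disjoint cells $K$ with volumes $|K|$, $\Sigma^h$ the set of ordered pairs of cells sharing a face $(K|L)$; $x_K$ barycenter, $\tau_{K|L}=|(K|L)|/|x_L-x_K|$, $\mathcal{T}^h_K=\{L:(K,L)\in\Sigma^h\}$. Given $V_K\in\mathbb{R}$ and symmetric $W_{KL}\in\mathbb{R}$, set $\mathsf{Q}^{h,\rho}_K=V_K+\sum_MW_{KM}\rho^h_M$ and $q_{K|L}=\mathsf{Q}^{h,\rho}_L-\mathsf{Q}^{h,\rho}_K$. Energy $\mathcal{E}_{\epsilon,h}(\rho)=\epsilon\sum_K\phi(u_K)|K|+\sum_KV_K\rho_K+\frac12\sum_{K,L}W_{KL}\rho_K\rho_L$ with $\phi(s)=s\log s-s+1$; its variational derivative is taken as $\mathcal{E}'_{\epsilon,h}(\rho)_K=\epsilon(\log\rho_K-\log\pi^{\epsilon,h,\rho}_K)$, with $\pi^{\epsilon,h,\rho}_K=|K|e^{-\mathsf{Q}^{h,\rho}_K/\epsilon}/Z^{\epsilon,h,\rho}$, $Z^{\epsilon,h,\rho}=\sum_K|K|e^{-\mathsf{Q}^{h,\rho}_K/\epsilon}$; $\overline\nabla f(K,L)=f(L)-f(K)$. Edge conductivity $\vartheta^{\epsilon,h,\rho}_{K|L}=\frac{\tau_{K|L}}{Z^{\epsilon,h,\rho}}\frac{2q_{K|L}/\epsilon}{\exp(\mathsf{Q}^{h,\rho}_L/\epsilon)-\exp(\mathsf{Q}^{h,\rho}_K/\epsilon)}$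 (extended continuously when $q_{K|L}=0$). `Cosh' dual dissipation potential: $\overline{\mathcal{R}}^*_{\epsilon,h}(\rho,\xi)=\frac12\sum_{(K,L)\in\Sigma^h}\Psi^*_\epsilon(\xi_{K|L})\sqrt{\bar u_K\bar u_L}\,\vartheta^{\epsilon,h,\rho}_{K|L}$ with $\bar u_K=\rho_K/\pi^{\epsilon,h,\rho}_K$ and $\Psi^*_\epsilon(s)=4\epsilon^2(\cosh(s/2\epsilon)-1)$; $D_2$ denotes the partial derivative in $\xi_{K|L}$ with $\vartheta^{\epsilon,h,\rho}$ held fixed. *)

(* Defs.v *)
From mathcomp Require Import all_boot all_order all_algebra.
From mathcomp Require Import all_classical all_reals all_analysis.
Set Implicit Arguments. Unset Strict Implicit. Unset Printing Implicit Defensive.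
Import Order.TTheory GRing.Theory Num.Theory.
Import numFieldNormedType.Exports.
Local Open Scope ring_scope.

Section SG.
Variables (R : realType) (T : finType).

Definition coshR (s : R) : R := (expR s + expR (- s)) / 2.

Definition edist (d : nat) (a b : 'rV[R]_d) : R :=
  Num.sqrt (\sum_(i < d) (b ord0 i - a ord0 i) ^+ 2).

Definition tau (d : nat) (face : T -> T -> R) (x : T -> 'rV[R]_d) (K L : T) : R :=
  face K L / edist (x K) (x L).

Variables (vol : T -> R) (V : T -> R) (W : T -> T -> R).

Definition Qpot (rho : T -> R) (K : T) : R := V K + \sum_M W K M * rho M.
Definition qKL (rho : T -> R) (K L : T) : R := Qpot rho L - Qpot rho K.

Definition Zpart (eps : R) (rho : T -> R) : R :=
  \sum_K vol K * expR (- Qpot rho K / eps).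
Definition piS (eps : R) (rho : T -> R) (K : T) : R :=
  vol K * expR (- Qpot rho K / eps) / Zpart eps rho.

Definition Eprime (eps : R) (rho : T -> R) (K : T) : R :=
  eps * (ln (rho K) - ln (piS eps rho K)).

Definition gradbar (f : T -> R) (K L : T) : R := f L - f K.

(* edge conductivity, extended continuously at q_{K|L} = 0 *)
Definition theta (eps : R) (tauf : T -> T -> R) (rho : T -> R) (K L : T) : R :=
  if qKL rho K L == 0 then
    tauf K L / Zpart eps rho * (2 * expR (- Qpot rho K / eps))
  else
    tauf K L / Zpart eps rho *
    ((2 * qKL rho K L / eps) / (expR (Qpot rho L / eps) - expR (Qpot rho K / eps))).

Definition Psistar (eps s : R) : R := 4 * eps ^+ 2 * (coshR (s / (2 * eps)) - 1).

Definition ubar (eps : R) (rho : T -> R) (K : T) : R := rho K / piS eps rho K.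

(* 'cosh' dual dissipation potential, with the conductivity th given as an
   explicit (fixed) argument; xi is a function on ordered pairs *)
Definition Rstar (eps : R) (Sigma : rel T) (rho : T -> R) (th : T -> T -> R)
    (xi : T -> T -> R) : R :=
  2^-1 * \sum_(p : T * T | Sigma p.1 p.2)
     Psistar eps (xi p.1 p.2) * Num.sqrt (ubar eps rho p.1 * ubar eps rho p.2)
     * th p.1 p.2.

Definition updxi (xi : T -> T -> R) (K L : T) (s : R) : T -> T -> R :=
  fun K' L' => if (K' == K) && (L' == L) then s else xi K' L'.

Definition bern (s : R) : R := if s == 0 then 1 else s / (expR s - 1).

Definition SGflux (eps : R) (tauf : T -> T -> R) (rho : T -> R) (K L : T) : R :=
  eps * tauf K L *
  (bern (qKL rho K L / eps) * (rho K / vol K)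
   - bern (- qKL rho K L / eps) * (rho L / vol L)).

End SG.

(* Main.v *)
Require Import Defs.
From mathcomp Require Import all_boot all_order all_algebra.
From mathcomp Require Import all_classical all_reals all_analysis.
From mathcomp Require Import ring lra.
Import Order.TTheory GRing.Theory Num.Theory.
Import numFieldNormedType.Exports.
Local Open Scope ring_scope.

Lemma dlin (R : realType) (k x : R) : is_derive x 1 (fun s : R => s * k) k.
Proof.
have H := is_deriveM (is_derive_id x (1:R)) (is_derive_cst k x 1).
have E : (fun s : R => s * k) = (id * cst k) by apply/funext.
rewrite E; apply: (is_derive_eq H).
by rewrite /= scaler0 add0r /GRing.scale /= mulr1.
Qed.

Lemma dexplin (R : realType) (k x : R) : is_derive x 1 (fun s : R => expR (s * k)) (expR (x * k) * k).
Proof.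
have H := (is_derive1_comp (f := expR) (g := fun s => s * k) (x := x) (is_derive_expR _) (@dlin R k x)).
have E : (fun s : R => expR (s * k)) = expR \o (fun s => s * k) by [].
by rewrite E; apply: (is_derive_eq H).
Qed.

Lemma dPsi (R : realType) (eps x : R) :
  is_derive x 1 (fun s => Psistar eps s)
   (4 * eps ^+ 2 * ((expR (x * (2 * eps)^-1) * (2 * eps)^-1 + expR (x * (- (2 * eps)^-1)) * (- (2 * eps)^-1)) / 2)).
Proof.
pose c := 4 * eps ^+ 2.
pose g := fun s : R => expR (s * (2 * eps)^-1).
pose h := fun s : R => expR (s * (- (2 * eps)^-1)).
have E : (fun s => Psistar eps s) = (cst c) * ((g + h) * cst (2^-1) - cst 1).
  apply/funext => s; by rewrite !fctE /Psistar /coshR /g /h /= mulrN.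
have Hg := @dexplin R (2 * eps)^-1 x.
have Hh := @dexplin R (- (2 * eps)^-1) x.
have H := is_deriveM (is_derive_cst c x 1) (is_deriveB (is_deriveM (is_deriveD Hg Hh) (is_derive_cst (2^-1 : R) x 1)) (is_derive_cst (1:R) x 1)).
rewrite E; apply: (is_derive_eq H).
rewrite !fctE /= /GRing.scale /= /c; ring.
Qed.

Lemma final (R : realType) (eps tau Z rK rL vK vL QK QL : R) :
  0 < eps -> 0 < Z -> 0 < vK -> 0 < vL ->
  eps * (if QL - QK == 0 then tau / Z * (2 * expR (- QK / eps))
         else tau / Z * ((2 * (QL - QK) / eps) / (expR (QL / eps) - expR (QK / eps))))
   * (rK / (vK * expR (- QK / eps) / Z) - rL / (vL * expR (- QL / eps) / Z)) / 2
  = eps * tau * (bern ((QL - QK) / eps) * (rK / vK) - bern (- (QL - QK) / eps) * (rL / vL)).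
Proof.
move=> ep Zp vKp vLp.
have e0 : eps != 0 by rewrite gt_eqF.
have Z0 : Z != 0 by rewrite gt_eqF.
have vK0 : vK != 0 by rewrite gt_eqF.
have vL0 : vL != 0 by rewrite gt_eqF.
rewrite !mulNr !expRN.
have A0 : expR (QK / eps) != 0 by rewrite gt_eqF ?expR_gt0.
have B0 : expR (QL / eps) != 0 by rewrite gt_eqF ?expR_gt0.
case: eqP => hq.
  have -> : QL = QK by apply/eqP; rewrite -subr_eq0; apply/eqP.
  rewrite subrr mul0r oppr0 /bern eqxx.
  field; rewrite ?e0 ?Z0 ?vK0 ?vL0 ?A0 //.
have q0 : (QL - QK) / eps != 0 by rewrite mulf_neq0 ?invr_eq0 //; apply/eqP.
have q0' : - ((QL - QK) / eps) != 0 by rewrite oppr_eq0.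
rewrite /bern (negbTE q0) (negbTE q0').
have -> : expR ((QL - QK) / eps) = expR (QL / eps) / expR (QK / eps) by rewrite mulrBl expRB.
have -> : expR (- ((QL - QK) / eps)) = expR (QK / eps) / expR (QL / eps) by rewrite -mulNr opprB mulrBl expRB.
have BA : expR (QL / eps) - expR (QK / eps) != 0.
  rewrite subr_eq0; apply/eqP => /expR_inj h; apply: hq.
  by rewrite -(divfK e0 QL) h divfK // subrr.
have BA' : expR (QL / eps) / expR (QK / eps) - 1 != 0.
  by rewrite -(divff A0) -mulrBl mulf_neq0 ?invr_eq0.
have AB' : expR (QK / eps) / expR (QL / eps) - 1 != 0.
  by rewrite -(divff B0) -mulrBl mulf_neq0 ?invr_eq0 // -oppr_eq0 opprB.
field; rewrite ?e0 ?Z0 ?vK0 ?vL0 ?A0 ?B0 ?BA ?BA' ?AB' //.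
by rewrite !mulN1r BA andbT -oppr_eq0 opprB BA.
Qed.

Theorem lemma3p6 (R : realType) (T : finType) (d : nat)
  (vol : T -> R) (Sigma : rel T) (face : T -> T -> R) (x : T -> 'rV[R]_d)
  (V : T -> R) (W : T -> T -> R) (eps : R) (rho : T -> R) (K L : T) :
  (forall K, 0 < vol K) ->
  symmetric Sigma -> irreflexive Sigma ->
  (forall K L, face K L = face L K) ->
  (forall K L, Sigma K L -> 0 < face K L) ->
  (forall K L, Sigma K L -> x K != x L) ->
  (forall K L, W K L = W L K) ->
  0 < eps ->
  (forall K, 0 < rho K) -> \sum_K rho K = 1 ->
  Sigma K L ->
  let tauf := tau face x in
  let xi0 := fun K' L' => - gradbar (Eprime vol V W eps rho) K' L' in
  is_derive (xi0 K L) 1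
    (fun s => Rstar vol V W eps Sigma rho (theta vol V W eps tauf rho)
                (updxi xi0 K L s))
    (SGflux vol V W eps tauf rho K L).
Proof.
move=> volP Ssym Sirr faceS faceP xne WS epsP rhoP rho1 SKL tauf xi0.
set th := theta vol V W eps tauf rho.
set ub := ubar vol V W eps rho.
pose m := Num.sqrt (ub K * ub L) * th K L.
pose C := 2^-1 * \sum_(p : T * T | Sigma p.1 p.2 && (p != (K, L)))
   Psistar eps (xi0 p.1 p.2) * Num.sqrt (ub p.1 * ub p.2) * th p.1 p.2.
have E : (fun s => Rstar vol V W eps Sigma rho th (updxi xi0 K L s))
    = (cst (2^-1 * m)) * (fun s => Psistar eps s) + cst C.
  apply/funext => s; rewrite !fctE /Rstar /C.
  rewrite (bigD1 (K, L)) //=.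
  rewrite {1}/updxi !eqxx /= mulrDr; congr (_ + _); first by rewrite /m /ub; ring.
  congr (_ * _); apply: eq_bigr => -[K' L'] /andP[_ hp] /=.
  rewrite /updxi ifF //; apply/negbTE; apply: contra hp => /andP[/eqP-> /eqP->] //.
have H := is_deriveD (is_deriveM (is_derive_cst (2^-1 * m) (xi0 K L) 1) (@dPsi R eps (xi0 K L))) (is_derive_cst C (xi0 K L) 1).
rewrite E; apply: (is_derive_eq H).
rewrite !fctE /= /GRing.scale /= !mulr0 !addr0.
have e0 : eps != 0 by rewrite gt_eqF.
have Zp : 0 < Zpart vol V W eps rho.
  rewrite /Zpart (bigD1 K) //=.
  have h1 : 0 < vol K * expR (- Qpot V W rho K / eps) by rewrite mulr_gt0 ?expR_gt0.
  have h2 : 0 <= \sum_(i | i != K) vol i * expR (- Qpot V W rho i / eps).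
    by apply: sumr_ge0 => i _; rewrite mulr_ge0 ?expR_ge0 // ltW.
  lra.
have piP J : 0 < piS vol V W eps rho J.
  by rewrite /piS mulr_gt0 ?invr_gt0 ?mulr_gt0 ?expR_gt0.
pose l J := ln (rho J) - ln (piS vol V W eps rho J).
have ubE J : ub J = expR (l J).
  by rewrite /ub /ubar /l expRB !lnK // posrE.
have xiE : xi0 K L = eps * l K - eps * l L by rewrite /xi0 /gradbar /Eprime opprB.
pose sK := expR (l K / 2). pose sL := expR (l L / 2).
have uK : ub K = sK * sK by rewrite ubE /sK -expRD -splitr.
have uL : ub L = sL * sL by rewrite ubE /sL -expRD -splitr.
have sKp : 0 < sK by rewrite expR_gt0.
have sLp : 0 < sL by rewrite expR_gt0.
have eA : expR (l K / 2 - l L / 2) = sK / sL by rewrite expRB.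
have eB : expR (l L / 2 - l K / 2) = sL / sK by rewrite expRB.
clearbody sK sL.
have sq : Num.sqrt (ub K * ub L) = sK * sL.
  rewrite uK uL (_ : sK * sK * (sL * sL) = (sK * sL) ^+ 2); last by ring.
  by rewrite sqrtr_sqr ger0_norm // mulr_ge0 // ltW.
have LHS : 2^-1 * m * (4 * eps ^+ 2 * ((expR (xi0 K L / (2 * eps)) / (2 * eps) +
     expR (xi0 K L * - (2 * eps)^-1) * - (2 * eps)^-1) / 2))
    = eps * th K L * (ub K - ub L) / 2.
  rewrite /m sq xiE.
  have -> : (eps * l K - eps * l L) / (2 * eps) = l K / 2 - l L / 2 by field.
  have -> : (eps * l K - eps * l L) * - (2 * eps)^-1 = l L / 2 - l K / 2 by field.
  rewrite eA eB uK uL.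
  have sK0 : sK != 0 by rewrite gt_eqF.
  have sL0 : sL != 0 by rewrite gt_eqF.
  by field; rewrite e0 sK0 sL0.
rewrite LHS /SGflux /ub /ubar /piS /th /theta /qKL /Zpart.
by apply: final.
Qed.
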